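(* There is a universal constant $C>0$ such that for all integers $m,n\ge1$ and all $p,q\in[0,2/3]$, \[ (1-Cm^{-1/3})P(m-1,n,p,q)-2m^{-2}\le P(m,n,p,q)\le(1+Cn^{-1/3})P(m,n-1,p,q)+2n^{-2}. \]
   Context: For integers $m,n\ge0$ and $p,q\in[0,1]$, $P(m,n,p,q)=\Pr(Y\ge X)$ where $X\sim\mathrm{Binom}(m,\max\{p,q\})$ and $Y\sim\mathrm{Binom}(n,\min\{p,q\})$ are independent. *)

(* Defs.v *)
From Stdlib Require Import Reals Arith.
Open Scope R_scope.

Definition binom_pmf (n : nat) (a : R) (k : nat) : R :=
  C n k * a ^ k * (1 - a) ^ (n - k).

(* P(m,n,p,q) = Pr(Y >= X), X ~ Binom(m, max p q), Y ~ Binom(n, min p q)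
   independent, written out as the double sum over the joint pmf. *)
Definition Pwin (m n : nat) (p q : R) : R :=
  let a := Rmax p q in
  let b := Rmin p q in
  sum_f_R0 (fun i =>
    sum_f_R0 (fun j =>
      if Nat.leb i j then binom_pmf m a i * binom_pmf n b j else 0) n) m.

(* Main.v *)
Require Import Defs.
From Stdlib Require Import Reals Lra Lia Psatz ZArith.
Open Scope R_scope.

Lemma sum_ext (f g : nat -> R) n :
  (forall i, (i <= n)%nat -> f i = g i) -> sum_f_R0 f n = sum_f_R0 g n.
Proof.
  intros H; induction n; simpl.
  - apply H; lia.
  - rewrite IHn by (intros; apply H; lia); rewrite H by lia; reflexivity.
Qed.

Lemma sum_le_ext (f g : nat -> R) n :
  (forall i, (i <= n)%nat -> f i <= g i) -> sum_f_R0 f n <= sum_f_R0 g n.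
Proof.
  intros H; induction n; simpl.
  - apply H; lia.
  - apply Rplus_le_compat; [apply IHn; intros; apply H; lia | apply H; lia].
Qed.

Lemma sum_nonneg (f : nat -> R) n :
  (forall i, (i <= n)%nat -> 0 <= f i) -> 0 <= sum_f_R0 f n.
Proof.
  intros H; induction n; simpl.
  - apply H; lia.
  - assert (0 <= f (S n)) by (apply H; lia).
    assert (0 <= sum_f_R0 f n) by (apply IHn; intros; apply H; lia). lra.
Qed.

Lemma sum_term_le (f : nat -> R) n k :
  (forall i, (i <= n)%nat -> 0 <= f i) -> (k <= n)%nat -> f k <= sum_f_R0 f n.
Proof.
  intros H; induction n; intros Hk; simpl.
  - replace k with 0%nat by lia; lra.
  - destruct (Nat.eq_dec k (S n)) as [->|Hne].
    + assert (0 <= sum_f_R0 f n) by (apply sum_nonneg; intros; apply H; lia). lra.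
    + assert (f k <= sum_f_R0 f n) by (apply IHn; [intros; apply H; lia| lia]).
      assert (0 <= f (S n)) by (apply H; lia). lra.
Qed.

Lemma sum_mono_n (f : nat -> R) n n' :
  (forall i, (i <= n')%nat -> 0 <= f i) -> (n <= n')%nat -> sum_f_R0 f n <= sum_f_R0 f n'.
Proof.
  intros H Hn; induction Hn.
  - lra.
  - simpl. assert (0 <= f (S m)) by (apply H; lia).
    assert (sum_f_R0 f n <= sum_f_R0 f m) by (apply IHHn; intros; apply H; lia). lra.
Qed.

Lemma sum_scal (c : R) (f : nat -> R) n :
  sum_f_R0 (fun i => c * f i) n = c * sum_f_R0 f n.
Proof. induction n; simpl; [|rewrite IHn]; ring. Qed.

Lemma sum_add (f g : nat -> R) n :
  sum_f_R0 (fun i => f i + g i) n = sum_f_R0 f n + sum_f_R0 g n.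
Proof. induction n; simpl; [|rewrite IHn]; ring. Qed.

Lemma sum_zero (f : nat -> R) n : (forall i, (i <= n)%nat -> f i = 0) -> sum_f_R0 f n = 0.
Proof.
  intros H; induction n; simpl; [apply H; lia|].
  rewrite IHn by (intros; apply H; lia); rewrite H by lia; ring.
Qed.

Lemma sum_swap (h : nat -> nat -> R) m n :
  sum_f_R0 (fun i => sum_f_R0 (fun j => h i j) n) m
  = sum_f_R0 (fun j => sum_f_R0 (fun i => h i j) m) n.
Proof.
  induction m; simpl.
  - reflexivity.
  - rewrite IHm. rewrite <- sum_add. reflexivity.
Qed.

Lemma sum_S (f : nat -> R) n : sum_f_R0 f (S n) = sum_f_R0 f n + f (S n).
Proof. reflexivity. Qed.

Lemma sum_ind_min (h : nat -> R) m j :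
  sum_f_R0 (fun i => if Nat.leb i j then h i else 0) m = sum_f_R0 h (Nat.min m j).
Proof.
  induction m.
  - simpl. reflexivity.
  - rewrite sum_S, IHm. destruct (Nat.leb (S m) j) eqn:E.
    + apply Nat.leb_le in E. replace (Nat.min m j) with m by lia.
      replace (Nat.min (S m) j) with (S m) by lia. rewrite sum_S. reflexivity.
    + apply Nat.leb_gt in E. replace (Nat.min m j) with j by lia.
      replace (Nat.min (S m) j) with j by lia. ring.
Qed.

Lemma sum_rev_block (h : nat -> R) j L :
  (forall i, (i <= j)%nat -> 0 <= h i) -> (L <= j)%nat ->
  sum_f_R0 (fun l => h (j - l)%nat) L <= sum_f_R0 h j.
Proof.
  revert L; induction j; intros L H HL.
  - replace L with 0%nat by lia. simpl. lra.
  - destruct L.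
    + simpl. replace (j - 0)%nat with j by lia. apply (sum_term_le h (S j) (S j)); auto.
    + rewrite decomp_sum by lia. simpl pred.
      replace (S j - 0)%nat with (S j) by lia.
      simpl sum_f_R0 at 2.
      assert (sum_f_R0 (fun i => h (S j - S i)%nat) L <= sum_f_R0 h j).
      { replace (sum_f_R0 (fun i => h (S j - S i)%nat) L) with (sum_f_R0 (fun l => h (j - l)%nat) L)
          by (apply sum_ext; intros; f_equal).
        apply IHj; [intros; apply H; lia| lia]. }
      lra.
Qed.

Lemma sum_tail_exact (h : nat -> R) i L :
  sum_f_R0 (fun k => if Nat.leb i k then h k else 0) (i + L)
  = sum_f_R0 (fun l => h (i + l)%nat) L.
Proof.
  induction L.
  - rewrite Nat.add_0_r. destruct i.
    + simpl. reflexivity.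
    + rewrite sum_S, sum_zero.
      * rewrite Nat.leb_refl. simpl. rewrite Nat.add_0_r. ring.
      * intros k Hk. destruct (Nat.leb (S i) k) eqn:E; [apply Nat.leb_le in E; lia| reflexivity].
  - rewrite Nat.add_succ_r, !sum_S, IHL.
    replace (Nat.leb i (S (i + L))) with true by (symmetry; apply Nat.leb_le; lia).
    rewrite Nat.add_succ_r. reflexivity.
Qed.

Lemma sum_tail_block (h : nat -> R) N i L :
  (forall k, (k <= N)%nat -> 0 <= h k) -> (i + L <= N)%nat ->
  sum_f_R0 (fun l => h (i + l)%nat) L
  <= sum_f_R0 (fun k => if Nat.leb i k then h k else 0) N.
Proof.
  intros H HL. rewrite <- sum_tail_exact. apply sum_mono_n; auto.
  intros k Hk. destruct (Nat.leb i k); [apply H; lia| lra].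
Qed.

Lemma C_nonneg n k : 0 <= C n k.
Proof.
  unfold C. apply Rle_mult_inv_pos; [apply pos_INR|].
  apply Rmult_lt_0_compat; apply INR_fact_lt_0.
Qed.

Lemma C_n0 n : C n 0 = 1.
Proof.
  unfold C. rewrite Nat.sub_0_r. simpl. field. apply INR_fact_neq_0.
Qed.

Lemma C_nn n : C n n = 1.
Proof.
  unfold C. rewrite Nat.sub_diag. simpl. field. apply INR_fact_neq_0.
Qed.

Lemma pmf_nonneg n a k : 0 <= a <= 1 -> 0 <= binom_pmf n a k.
Proof.
  intros Ha. unfold binom_pmf. apply Rmult_le_pos; [apply Rmult_le_pos|].
  - apply C_nonneg.
  - apply pow_le; lra.
  - apply pow_le; lra.
Qed.

Lemma pmf_ratio N a k : a < 1 -> (k < N)%nat ->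
  binom_pmf N a (S k) = binom_pmf N a k * (INR (N - k) * a / (INR (S k) * (1 - a))).
Proof.
  intros Ha Hk. unfold binom_pmf. rewrite pascal_step3 by lia.
  replace (N - k)%nat with (S (N - S k)) at 2 by lia.
  simpl pow. field. split; [lra|]. apply not_0_INR; lia.
Qed.

Lemma pmf_sum N a z :
  sum_f_R0 (fun k => binom_pmf N a k * z ^ k) N = (1 - a + a * z) ^ N.
Proof.
  replace (1 - a + a * z) with (a * z + (1 - a)) by ring.
  rewrite binomial. apply sum_ext. intros i _. unfold binom_pmf.
  rewrite Rpow_mult_distr. ring.
Qed.

Lemma pmf_total N a : sum_f_R0 (fun k => binom_pmf N a k) N = 1.
Proof.
  assert (H := pmf_sum N a 1). replace (1 - a + a * 1) with 1 in H by ring.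
  rewrite pow1 in H. rewrite <- H. apply sum_ext. intros. rewrite pow1. ring.
Qed.

Lemma pmf_pascal0 M a : binom_pmf (S M) a 0 = (1 - a) * binom_pmf M a 0.
Proof. unfold binom_pmf. rewrite !C_n0, !Nat.sub_0_r. simpl pow. ring. Qed.

Lemma pmf_pascal M a i : (i <= M)%nat ->
  binom_pmf (S M) a (S i) = a * binom_pmf M a i
     + (1 - a) * (if Nat.leb (S i) M then binom_pmf M a (S i) else 0).
Proof.
  intros Hi. destruct (Nat.leb (S i) M) eqn:E.
  - apply Nat.leb_le in E. unfold binom_pmf. rewrite <- pascal by lia.
    replace (S M - S i)%nat with (M - i)%nat by lia.
    replace (M - i)%nat with (S (M - S i)) by lia. simpl pow. ring.
  - apply Nat.leb_gt in E. replace i with M by lia. unfold binom_pmf.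
    rewrite !C_nn, !Nat.sub_diag. simpl. ring.
Qed.

Definition Fd (M : nat) (a : R) (j : nat) : R := sum_f_R0 (binom_pmf M a) (Nat.min M j).

Lemma Fd_0 M a : Fd M a 0 = binom_pmf M a 0.
Proof. unfold Fd. rewrite Nat.min_0_r. reflexivity. Qed.

Lemma Fd_S m a j : Fd m a (S j) = Fd m a j + (if Nat.leb (S j) m then binom_pmf m a (S j) else 0).
Proof.
  unfold Fd. destruct (Nat.leb (S j) m) eqn:E.
  - apply Nat.leb_le in E. replace (Nat.min m (S j)) with (S j) by lia.
    replace (Nat.min m j) with j by lia. reflexivity.
  - apply Nat.leb_gt in E. replace (Nat.min m (S j)) with m by lia.
    replace (Nat.min m j) with m by lia. ring.
Qed.

Lemma Fd_pascal M a j :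
  Fd (S M) a j = Fd M a j - a * (if Nat.leb j M then binom_pmf M a j else 0).
Proof.
  induction j.
  - rewrite !Fd_0, pmf_pascal0. simpl. ring.
  - rewrite !Fd_S, IHj.
    destruct (Nat.leb j M) eqn:E1.
    + apply Nat.leb_le in E1.
      replace (Nat.leb (S j) (S M)) with true by (symmetry; apply Nat.leb_le; lia).
      rewrite pmf_pascal by lia.
      destruct (Nat.leb (S j) M); ring.
    + apply Nat.leb_gt in E1.
      replace (Nat.leb (S j) (S M)) with false by (symmetry; apply Nat.leb_gt; lia).
      replace (Nat.leb (S j) M) with false by (symmetry; apply Nat.leb_gt; lia). ring.
Qed.

Lemma Fd_nonneg M a j : 0 <= a <= 1 -> 0 <= Fd M a j.
Proof. intros. unfold Fd. apply sum_nonneg. intros; apply pmf_nonneg; auto. Qed.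

Lemma Fd_le1 M a j : 0 <= a <= 1 -> Fd M a j <= 1.
Proof.
  intros. unfold Fd. rewrite <- (pmf_total M a). apply sum_mono_n; [|lia].
  intros; apply pmf_nonneg; auto.
Qed.

Definition Td (N : nat) (b : R) (i : nat) : R :=
  sum_f_R0 (fun k => if Nat.leb i k then binom_pmf N b k else 0) N.

Lemma Pwin_form2 m n p q :
  Pwin m n p q = sum_f_R0 (fun i => binom_pmf m (Rmax p q) i * Td n (Rmin p q) i) m.
Proof.
  unfold Pwin, Td. apply sum_ext. intros i _. rewrite <- sum_scal.
  apply sum_ext. intros j _. destruct (Nat.leb i j); ring.
Qed.

Lemma Pwin_form1 m n p q :
  Pwin m n p q = sum_f_R0 (fun j => binom_pmf n (Rmin p q) j * Fd m (Rmax p q) j) n.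
Proof.
  unfold Pwin. rewrite sum_swap. apply sum_ext. intros j _. unfold Fd.
  rewrite <- sum_ind_min, <- sum_scal. apply sum_ext. intros i _.
  destruct (Nat.leb i j); ring.
Qed.

Lemma Td_0 N b : Td N b 0 = 1.
Proof.
  unfold Td. rewrite <- (pmf_total N b). apply sum_ext. intros. reflexivity.
Qed.

Lemma Td_S N b i : Td N b (S i) = 1 - Fd N b i.
Proof.
  unfold Td, Fd. rewrite <- sum_ind_min, <- (pmf_total N b).
  replace (sum_f_R0 (fun k => binom_pmf N b k) N -
     sum_f_R0 (fun i0 => if Nat.leb i0 i then binom_pmf N b i0 else 0) N)
   with (sum_f_R0 (fun k => binom_pmf N b k) N +
     (-1) * sum_f_R0 (fun i0 => if Nat.leb i0 i then binom_pmf N b i0 else 0) N) by ring.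
  rewrite <- sum_scal, <- sum_add. apply sum_ext. intros k _.
  destruct (Nat.le_gt_cases k i) as [H|H].
  - replace (Nat.leb (S i) k) with false by (symmetry; apply Nat.leb_gt; lia).
    replace (Nat.leb k i) with true by (symmetry; apply Nat.leb_le; lia). ring.
  - replace (Nat.leb (S i) k) with true by (symmetry; apply Nat.leb_le; lia).
    replace (Nat.leb k i) with false by (symmetry; apply Nat.leb_gt; lia). ring.
Qed.

Lemma Td_pascal N b i :
  Td (S N) b (S i) = Td N b (S i) + b * (if Nat.leb i N then binom_pmf N b i else 0).
Proof. rewrite !Td_S, Fd_pascal. ring. Qed.

Lemma Td_nonneg N b i : 0 <= b <= 1 -> 0 <= Td N b i.
Proof.
  intros. unfold Td. apply sum_nonneg. intros k _. destruct (Nat.leb i k); [apply pmf_nonneg; auto| lra].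
Qed.

Lemma Pwin_nonneg m n p q : 0 <= p <= 1 -> 0 <= q <= 1 -> 0 <= Pwin m n p q.
Proof.
  intros. rewrite Pwin_form2. apply sum_nonneg. intros. apply Rmult_le_pos.
  - apply pmf_nonneg. unfold Rmax; destruct (Rle_dec p q); lra.
  - apply Td_nonneg. unfold Rmin; destruct (Rle_dec p q); lra.
Qed.

Lemma bern x l : 0 <= x <= 1 -> 1 - INR l * x <= (1 - x) ^ l.
Proof.
  intros Hx. induction l.
  - simpl. lra.
  - rewrite S_INR. simpl pow.
    assert (0 <= INR l) by apply pos_INR.
    assert (0 <= (1 - x) ^ l) by (apply pow_le; lra).
    nra.
Qed.

Lemma sum_INR L : sum_f_R0 (fun l => INR l) L = INR L * (INR L + 1) / 2.
Proof.
  induction L.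
  - simpl. lra.
  - rewrite sum_S, IHL, S_INR. field.
Qed.

Lemma geo_lower (K : nat) (th : R) :
  (1 <= K)%nat -> 1 - / INR K <= th -> 
  (INR K + 1) / 2 <= sum_f_R0 (fun l => th ^ l) (K - 1).
Proof.
  intros HK Hth.
  assert (HKp : 0 < INR K) by (apply lt_0_INR; lia).
  assert (Hinv : / INR K <= 1).
  { rewrite <- Rinv_1. apply Rinv_le_contravar; [lra|]. apply (le_INR 1); lia. }
  assert (Hinv0 : 0 < / INR K) by (apply Rinv_0_lt_compat; lra).
  apply Rle_trans with (sum_f_R0 (fun l => 1 - INR l * / INR K) (K - 1)).
  - destruct K as [|L]; [lia|]. replace (S L - 1)%nat with L by lia.
    replace (sum_f_R0 (fun l => 1 - INR l * / INR (S L)) L)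
      with (sum_f_R0 (fun l => 1) L + (- / INR (S L)) * sum_f_R0 (fun l => INR l) L).
    + rewrite sum_INR. rewrite sum_cte. rewrite !S_INR. rewrite S_INR in HKp.
      apply Req_le. field. lra.
    + rewrite <- sum_scal, <- sum_add. apply sum_ext. intros. ring.
  - apply sum_le_ext. intros l _. apply Rle_trans with ((1 - / INR K) ^ l).
    + apply bern. lra.
    + apply pow_incr. lra.
Qed.

Lemma exp_big x : 0 <= x -> (x / 6) ^ 6 <= exp x.
Proof.
  intros Hx. replace x with (6 * (x / 6)) at 2 by field.
  assert (exp (6 * (x / 6)) = exp (x / 6) ^ 6).
  { replace (6 * (x/6)) with (x/6 + x/6 + x/6 + x/6 + x/6 + x/6) by field.
    rewrite !exp_plus. simpl. ring. }
  rewrite H. apply pow_incr. split; [lra|].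
  assert (H1 := exp_ineq1_le (x/6)). lra.
Qed.

Lemma exp_pow_nat z N : exp z ^ N = exp (INR N * z).
Proof.
  induction N.
  - simpl. rewrite Rmult_0_l, exp_0. reflexivity.
  - simpl pow. rewrite IHN, S_INR, <- exp_plus. f_equal. ring.
Qed.

Lemma pow_le_exp z N : 0 <= 1 + z -> (1 + z) ^ N <= exp (INR N * z).
Proof.
  intros H. rewrite <- exp_pow_nat. apply pow_incr. split; [lra|]. apply exp_ineq1_le.
Qed.

Lemma inv_1my y : 0 <= y <= 1/2 -> / (1 - y) <= exp (y + 2 * y ^ 2).
Proof.
  intros Hy. apply Rle_trans with (1 + (y + 2 * y ^ 2)); [|apply exp_ineq1_le].
  rewrite <- (Rmult_1_l (/ (1 - y))). apply Rle_trans with ((1 + (y + 2 * y^2)) * (1 - y) * / (1 - y)).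
  - apply Rmult_le_compat_r; [apply Rlt_le, Rinv_0_lt_compat; lra|]. nra.
  - right. field. lra.
Qed.

Lemma inv_1px x : 0 <= x -> / (1 + x) <= exp (- x + x ^ 2).
Proof.
  intros Hx. apply Rle_trans with (1 + (- x + x ^ 2)); [|apply exp_ineq1_le].
  rewrite <- (Rmult_1_l (/ (1 + x))). apply Rle_trans with ((1 + (- x + x^2)) * (1 + x) * / (1 + x)).
  - apply Rmult_le_compat_r; [apply Rlt_le, Rinv_0_lt_compat; lra|]. nra.
  - right. field. lra.
Qed.

Lemma pmf_term_gf N a z j : 0 <= a <= 1 -> 0 <= z -> (j <= N)%nat ->
  binom_pmf N a j * z ^ j <= (1 - a + a * z) ^ N.
Proof.
  intros Ha Hz Hj. rewrite <- pmf_sum.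
  apply (sum_term_le (fun k => binom_pmf N a k * z ^ k)); auto.
  intros. apply Rmult_le_pos; [apply pmf_nonneg; auto| apply pow_le; auto].
Qed.

Lemma chernoff_low M a y j : 0 <= a <= 1 -> 0 <= y <= 1/2 -> (j <= M)%nat ->
  binom_pmf M a j <= exp (- a * INR M * y + INR j * (y + 2 * y ^ 2)).
Proof.
  intros Ha Hy Hj.
  assert (H1 := pmf_term_gf M a (1 - y) j Ha ltac:(lra) Hj).
  assert (H2 : (1 - a + a * (1 - y)) ^ M <= exp (INR M * (- a * y))).
  { replace (1 - a + a * (1 - y)) with (1 + (- a * y)) by ring. apply pow_le_exp. nra. }
  assert (H3 : (/ (1 - y)) ^ j <= exp (INR j * (y + 2 * y ^ 2))).
  { rewrite <- exp_pow_nat. apply pow_incr. split; [apply Rlt_le, Rinv_0_lt_compat; lra|].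
    apply inv_1my; auto. }
  assert (Hp : 0 <= binom_pmf M a j) by (apply pmf_nonneg; auto).
  assert (Hpos : 0 < (1 - y) ^ j) by (apply pow_lt; lra).
  replace (binom_pmf M a j) with (binom_pmf M a j * (1 - y) ^ j * (/ (1 - y)) ^ j).
  2:{ rewrite pow_inv. field. lra. }
  replace (- a * INR M * y + INR j * (y + 2 * y ^ 2)) with
    (INR M * (- a * y) + INR j * (y + 2 * y ^ 2)) by ring.
  rewrite exp_plus.
  assert (0 <= (/ (1 - y)) ^ j) by (apply pow_le, Rlt_le, Rinv_0_lt_compat; lra).
  apply Rmult_le_compat; try nra.
Qed.

Lemma chernoff_up N b x j : 0 <= b <= 1 -> 0 <= x -> (j <= N)%nat ->
  binom_pmf N b j <= exp (b * INR N * x - INR j * x + INR j * x ^ 2).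
Proof.
  intros Hb Hx Hj.
  assert (H1 := pmf_term_gf N b (1 + x) j Hb ltac:(lra) Hj).
  assert (H2 : (1 - b + b * (1 + x)) ^ N <= exp (INR N * (b * x))).
  { replace (1 - b + b * (1 + x)) with (1 + (b * x)) by ring. apply pow_le_exp. nra. }
  assert (H3 : (/ (1 + x)) ^ j <= exp (INR j * (- x + x ^ 2))).
  { rewrite <- exp_pow_nat. apply pow_incr. split; [apply Rlt_le, Rinv_0_lt_compat; lra|].
    apply inv_1px; auto. }
  assert (Hp : 0 <= binom_pmf N b j) by (apply pmf_nonneg; auto).
  assert (Hpos : 0 < (1 + x) ^ j) by (apply pow_lt; lra).
  replace (binom_pmf N b j) with (binom_pmf N b j * (1 + x) ^ j * (/ (1 + x)) ^ j).
  2:{ rewrite pow_inv. field. lra. }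
  replace (b * INR N * x - INR j * x + INR j * x ^ 2) with
    (INR N * (b * x) + INR j * (- x + x ^ 2)) by ring.
  rewrite exp_plus.
  assert (0 <= (/ (1 + x)) ^ j) by (apply pow_le, Rlt_le, Rinv_0_lt_compat; lra).
  apply Rmult_le_compat; try nra.
Qed.

Lemma chernoff_pois N b j : 0 <= b <= 1 -> (j <= N)%nat ->
  binom_pmf N b j <= exp (b * INR N * (exp 2 - 1) - 2 * INR j).
Proof.
  intros Hb Hj.
  assert (He : 1 <= exp 2) by (assert (H := exp_ineq1_le 2); lra).
  assert (H1 := pmf_term_gf N b (exp 2) j Hb ltac:(lra) Hj).
  assert (H2 : (1 - b + b * exp 2) ^ N <= exp (INR N * (b * (exp 2 - 1)))).
  { replace (1 - b + b * exp 2) with (1 + b * (exp 2 - 1)) by ring. apply pow_le_exp. nra. }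
  rewrite exp_pow_nat in H1.
  replace (b * INR N * (exp 2 - 1) - 2 * INR j) with
    (INR N * (b * (exp 2 - 1)) + - (INR j * 2)) by ring.
  rewrite exp_plus, exp_Ropp.
  assert (0 < exp (INR j * 2)) by apply exp_pos.
  apply Rmult_le_reg_r with (exp (INR j * 2)); auto.
  rewrite Rmult_assoc, Rinv_l by lra. lra.
Qed.

Lemma nat_ceil x : 0 <= x -> exists K : nat, x <= INR K <= x + 1.
Proof.
  intros Hx. destruct (archimed x) as [H1 H2].
  assert (Hz : (0 <= up x)%Z).
  { apply le_IZR. simpl. lra. }
  exists (Z.to_nat (up x)). rewrite INR_IZR_INZ, Z2Nat.id by auto. lra.
Qed.

Lemma exp_small s k : 1 <= s -> 6 * s <= k -> exp (- k) <= / s ^ 6.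
Proof.
  intros Hs Hk. rewrite exp_Ropp. apply Rinv_le_contravar; [apply pow_lt; lra|].
  apply Rle_trans with ((k/6)^6); [apply pow_incr; lra| apply exp_big; lra].
Qed.

Notation cc := (1000%R) (only parsing).

Lemma ratio_down M a i : 0 < a < 1 -> (1 <= i <= M)%nat ->
  binom_pmf M a (i - 1) = binom_pmf M a i * (INR i * (1 - a) / (INR (M - (i - 1)) * a)).
Proof.
  intros Ha Hi. destruct i as [|k]; [lia|]. replace (S k - 1)%nat with k by lia.
  rewrite pmf_ratio by (lra || lia).
  assert (INR (M - k) <> 0) by (apply not_0_INR; lia).
  assert (INR (S k) <> 0) by (apply not_0_INR; lia).
  field. repeat split; lra.
Qed.

Lemma lemmaX M a s j :
  0 < s -> s ^ 3 = INR (S M) -> 0 <= a <= 2/3 -> (j <= M)%nat ->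
  a * binom_pmf M a j <= cc / s * Fd M a j + / s ^ 6.
Proof.
  intros Hs Hs3 Ha Hj.
  set (e := cc / s).
  assert (He : 0 < e) by (unfold e; apply Rdiv_lt_0_compat; lra).
  assert (Hf0 : 0 <= binom_pmf M a j) by (apply pmf_nonneg; lra).
  assert (HFd : Fd M a j = sum_f_R0 (binom_pmf M a) j).
  { unfold Fd. f_equal. lia. }
  assert (Hs6 : 0 <= / s ^ 6) by (apply Rlt_le, Rinv_0_lt_compat, pow_lt; lra).
  assert (Hfle : binom_pmf M a j <= Fd M a j).
  { rewrite HFd. apply (sum_term_le (binom_pmf M a) j j); [|lia]. intros; apply pmf_nonneg; lra. }
  destruct (Rle_dec a e) as [Hae|Hae].
  { apply Rle_trans with (e * binom_pmf M a j); [apply Rmult_le_compat_r; lra|].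
    assert (e * binom_pmf M a j <= e * Fd M a j) by (apply Rmult_le_compat_l; lra). lra. }
  apply Rnot_le_lt in Hae.
  assert (Hsbig : 1500 <= s).
  { unfold e in Hae. apply Rmult_lt_compat_r with (r := s) in Hae; auto.
    unfold Rdiv in Hae. rewrite Rmult_assoc, Rinv_l in Hae by lra. nra. }
  assert (Hapos : 0 < a) by lra.
  destruct (nat_ceil (2 * a / e)) as [K [HK1 HK2]].
  { apply Rlt_le, Rdiv_lt_0_compat; lra. }
  assert (Hae1 : 1 < a / e) by (apply (Rmult_lt_reg_r e); [lra|]; unfold Rdiv; rewrite Rmult_assoc, Rinv_l; lra).
  assert (HK : 2 < INR K) by lra.
  assert (HKn : (1 <= K)%nat) by (apply INR_le; simpl; lra).
  set (m := INR (S M)).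
  assert (Hm : m = s ^ 3) by (unfold m; auto).
  set (t := m * a * (1 - / (4 * INR K))).
  assert (HKinv : 0 < / INR K <= 1/2).
  { split; [apply Rinv_0_lt_compat; lra|]. apply Rle_trans with (/2); [|lra].
    apply Rinv_le_contravar; lra. }
  assert (Ht0 : 0 <= t).
  { unfold t. rewrite Rinv_mult. assert (0 <= m) by (unfold m; apply pos_INR).
    apply Rmult_le_pos; [apply Rmult_le_pos; lra|]. lra. }
  destruct (Rle_dec (t + INR K - 1) (INR j)) as [Hcase|Hcase].
  - (* near the mean: block bound *)
    set (th := 1 - / INR K).
    assert (Hblock : forall l, (l <= K - 1)%nat ->
              th ^ l * binom_pmf M a j <= binom_pmf M a (j - l)).
    { induction l; intros Hl.
      - simpl. rewrite Nat.sub_0_r. lra.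
      - assert (IH := IHl ltac:(lia)).
        set (i := (j - l)%nat).
        assert (HlK2 : INR l <= INR K - 2).
        { assert (HlK : (l <= K - 2)%nat) by lia. apply le_INR in HlK.
          rewrite minus_INR in HlK by lia. simpl in HlK. lra. }
        assert (Hlj : (l <= j)%nat) by (apply INR_le; lra).
        assert (Hi1 : t + 1 <= INR i).
        { unfold i. rewrite minus_INR by auto. lra. }
        assert (Hiint : (1 <= i <= M)%nat).
        { split.
          - apply INR_le. simpl. lra.
          - unfold i. lia. }
        replace (j - S l)%nat with (i - 1)%nat by (unfold i; lia).
        rewrite ratio_down by (auto; lra).
        assert (Hr : th <= INR i * (1 - a) / (INR (M - (i - 1)) * a)).
        { assert (HMi : INR (M - (i - 1)) = m - INR i).
          { unfold m. rewrite minus_INR by lia. rewrite minus_INR by lia. change (INR 1) with 1. rewrite (S_INR M). ring. }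
          rewrite HMi.
          assert (Hmi : 0 < m - INR i).
          { rewrite <- HMi. apply lt_0_INR. lia. }
          apply Rmult_le_reg_r with ((m - INR i) * a); [nra|].
          unfold Rdiv. rewrite Rmult_assoc, Rinv_l by nra. rewrite Rmult_1_r.
          unfold th. set (u := / INR K) in *.
          assert (Hti : m * a * (1 - u / 4) <= INR i).
          { unfold t in Hi1. rewrite Rinv_mult in Hi1. fold u in Hi1. lra. }
          assert (0 <= m) by (unfold m; apply pos_INR).
          assert (Hq : m * a * ((1 - u/4) * (1 - a * u) - (1 - u)) >= 0).
          { assert (0 <= m * a) by nra. 
            assert ((1 - u/4) * (1 - a * u) - (1 - u) = u * (3/4 - a) + a * u * u / 4) by field.
            assert (0 <= u * (3/4 - a) + a * u * u / 4) by nra. nra. }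
          assert (INR i * (1 - a * u) >= m * a * (1 - u / 4) * (1 - a * u)).
          { apply Rle_ge, Rmult_le_compat_r; nra. }
          nra. }
        simpl pow.
        assert (0 <= th) by (unfold th; lra).
        assert (0 <= binom_pmf M a i) by (apply pmf_nonneg; lra).
        apply Rle_trans with (th * binom_pmf M a i).
        + rewrite Rmult_assoc. apply Rmult_le_compat_l; auto.
        + rewrite Rmult_comm. apply Rmult_le_compat_l; auto. }
    assert (HKj : (K - 1 <= j)%nat).
    { apply INR_le. rewrite minus_INR by lia. simpl. lra. }
    assert (Hsumth : (INR K + 1) / 2 * binom_pmf M a j <= Fd M a j).
    { apply Rle_trans with (sum_f_R0 (fun l => th ^ l * binom_pmf M a j) (K - 1)).
      - rewrite (sum_ext _ (fun l => binom_pmf M a j * th ^ l)) by (intros; ring).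
        rewrite sum_scal. rewrite Rmult_comm. apply Rmult_le_compat_l; auto.
        apply geo_lower; auto. unfold th; lra.
      - apply Rle_trans with (sum_f_R0 (fun l => binom_pmf M a (j - l)%nat) (K - 1)).
        + apply sum_le_ext. intros. apply Hblock; auto.
        + rewrite HFd. apply sum_rev_block; auto. intros; apply pmf_nonneg; lra. }
    assert (a * binom_pmf M a j <= e * Fd M a j).
    { apply Rle_trans with (e * ((INR K + 1) / 2 * binom_pmf M a j)); [|apply Rmult_le_compat_l; lra].
      assert (a <= e * ((INR K + 1) / 2)).
      { assert (a / e * e = a) by (field; lra). nra. }
      nra. }
    lra.
  - (* far below the mean: Chernoff *)
    apply Rnot_le_lt in Hcase.
    set (D := a * INR M - INR j).
    assert (HmM : m = INR M + 1) by (unfold m; rewrite S_INR; auto).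
    assert (HKle : INR K <= 3 * (a / e)) by lra.
    assert (HKle2 : INR K <= 2 * s / cc).
    { assert (a / e <= (2/3) / e) by (apply Rmult_le_compat_r; [apply Rlt_le, Rinv_0_lt_compat|]; lra).
      assert ((2/3)/e = (2/3) * s / cc) by (unfold e; field; lra). lra. }
    assert (Hmterm : cc * s ^ 2 / 12 <= m * a / (4 * INR K)).
    { apply Rmult_le_reg_r with (4 * INR K); [lra|].
      unfold Rdiv at 2. rewrite Rmult_assoc, Rinv_l, Rmult_1_r by lra.
      rewrite Hm.
      assert (4 * INR K * (cc * s^2 / 12) <= 4 * (3 * (a/e)) * (cc * s^2/12)).
      { apply Rmult_le_compat_r; [nra| lra]. }
      assert (4 * (3 * (a/e)) * (cc * s^2/12) = s ^ 3 * a) by (unfold e; field; lra).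
      lra. }
    assert (HD : cc * s ^ 2 / 24 <= D).
    { unfold D. assert (t = m * a - m * a / (4 * INR K)) by (unfold t; field; lra).
      assert (cc * s^2 / 24 + 2 * s / cc <= cc * s^2/12).
      { assert (s <= s ^ 2) by nra. lra. }
      nra. }
    assert (HDpos : 0 < D) by (nra).
    assert (HDle : D <= INR M) by (unfold D; assert (0 <= INR j) by apply pos_INR; assert (0<=INR M) by apply pos_INR; nra).
    assert (HMpos : 0 < INR M) by lra.
    set (y := D / (4 * INR M)).
    assert (Hy : 0 <= y <= 1/2).
    { unfold y. split.
      - apply Rlt_le, Rdiv_lt_0_compat; lra.
      - apply Rmult_le_reg_r with (4 * INR M); [lra|]. unfold Rdiv. rewrite Rmult_assoc, Rinv_l by lra. lra. }
    assert (Hch := chernoff_low M a y j ltac:(lra) Hy Hj).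
    assert (Hexp : - a * INR M * y + INR j * (y + 2 * y ^ 2) <= - (D ^ 2 / (8 * INR M))).
    { assert (Hjle : INR j <= INR M) by (apply le_INR; auto).
      assert (- a * INR M * y + INR j * (y + 2 * y ^ 2) = - D * y + 2 * INR j * y^2) by (unfold D; ring).
      assert (- D * y + 2 * INR M * y ^ 2 = - (D ^ 2 / (8 * INR M))) by (unfold y; field; lra).
      assert (0 <= y^2) by nra. nra. }
    assert (Hbig : 6 * s <= D ^ 2 / (8 * INR M)).
    { assert (HM3 : INR M <= s ^ 3) by lra.
      assert ((cc * s^2/24)^2 <= D^2) by (apply pow_incr; split; nra).
      apply Rle_trans with ((cc * s ^ 2 / 24) ^ 2 / (8 * s ^ 3)).
      - replace ((cc * s ^ 2 / 24) ^ 2 / (8 * s ^ 3)) with (cc ^ 2 / 4608 * s) by (field; lra).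
        lra.
      - unfold Rdiv. apply Rmult_le_compat; try nra.
        + apply Rlt_le, Rinv_0_lt_compat. nra.
        + apply Rinv_le_contravar; nra. }
    assert (binom_pmf M a j <= / s ^ 6).
    { apply Rle_trans with (exp (- (D ^ 2 / (8 * INR M)))).
      - apply Rle_trans with (1 := Hch).
        destruct (Rle_lt_or_eq_dec _ _ Hexp) as [Hl|Hq].
        + apply Rlt_le, exp_increasing; auto.
        + rewrite Hq; lra.
      - apply exp_small; lra. }
    assert (0 <= e * Fd M a j) by (apply Rmult_le_pos; [lra| apply Fd_nonneg; lra]).
    assert (a * binom_pmf M a j <= binom_pmf M a j) by nra.
    lra.
Qed.

Lemma exp_mono x y : x <= y -> exp x <= exp y.
Proof.
  intros H. destruct (Rle_lt_or_eq_dec _ _ H) as [Hl|Hq].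
  + apply Rlt_le, exp_increasing; auto.
  + rewrite Hq; lra.
Qed.

Lemma tail_up N b D j : 0 <= b <= 1 -> 0 < D <= b * INR N ->
  b * INR N + D <= INR j -> (j <= N)%nat ->
  binom_pmf N b j <= exp (- (D ^ 2 / (8 * (b * INR N)))).
Proof.
  intros Hb HD Hj HjN.
  set (lam := b * INR N) in *.
  set (x := D / (4 * lam)).
  assert (Hx : 0 <= x <= 1/4).
  { unfold x. split.
    - apply Rlt_le, Rdiv_lt_0_compat; lra.
    - apply Rmult_le_reg_r with (4 * lam); [lra|]. unfold Rdiv. rewrite Rmult_assoc, Rinv_l by lra. lra. }
  apply Rle_trans with (1 := chernoff_up N b x j Hb ltac:(lra) HjN).
  apply exp_mono. fold lam.
  assert (H1 : - INR j * x * (1 - x) <= - (lam + D) * x * (1 - x)).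
  { assert (0 <= x * (1 - x)) by nra. nra. }
  assert (H2 : lam * x - (lam + D) * x * (1 - x) <= - D * x + 2 * lam * x ^ 2).
  { assert (0 <= x^2) by nra. nra. }
  assert (H3 : - D * x + 2 * lam * x ^ 2 = - (D ^ 2 / (8 * lam))) by (unfold x; field; lra).
  nra.
Qed.

Lemma exp2_le : exp 2 <= 9.
Proof.
  replace 2 with (1 + 1) by ring. rewrite exp_plus.
  assert (H := exp_le_3). assert (0 < exp 1) by apply exp_pos. nra.
Qed.

Lemma tailY N b s K j :
  0 < s -> s ^ 3 = INR (S N) -> cc <= s -> 0 < b <= 2/3 -> (j <= N)%nat ->
  1 <= INR K -> INR K <= 2 * b / (cc / s) + 1 + 1 ->
  INR (S N) * b * (1 + / (3 * INR K)) - INR K < INR j ->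
  cc / s * INR (S N) / 2 < INR (S j) ->
  binom_pmf N b j <= / s ^ 6.
Proof.
  intros Hs Hs3 Hcs Hb Hj HK HK2 HjA HjB.
  set (e := cc / s) in *.
  assert (He : 0 < e <= 1).
  { unfold e. split; [apply Rdiv_lt_0_compat; lra|].
    apply Rmult_le_reg_r with s; [lra|]. unfold Rdiv. rewrite Rmult_assoc, Rinv_l by lra. lra. }
  set (n := INR (S N)) in *.
  assert (Hn : n = s ^ 3) by (unfold n; auto).
  assert (HNn : INR N = n - 1) by (unfold n; rewrite S_INR; ring).
  assert (Hs2 : 1000 * s <= s ^ 2) by nra.
  assert (Hs1 : 1000 <= s ^ 2) by nra.
  assert (Hn9 : 1000 * s ^ 2 <= n).
  { rewrite Hn. assert (0 <= s^2 * (s-1000)) by (apply Rmult_le_pos; [nra|lra]).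
    replace (s^3) with (s^2*s) by ring. nra. }
  assert (Hen : n * e = cc * s ^ 2) by (unfold e; rewrite Hn; field; lra).
  assert (Hjle : INR j <= INR N) by (apply le_INR; auto).
  assert (HjB' : e * n / 2 < INR j + 1) by (rewrite S_INR in HjB; lra).
  assert (Hnpos : 0 < n) by lra.
  destruct (Rle_dec e b) as [Hbe2|Hbe2].
  -
    assert (Hbe1 : 1 <= b / e).
    { apply (Rmult_le_reg_r e); [lra|]. unfold Rdiv. rewrite Rmult_assoc, Rinv_l by lra. lra. }
    assert (HK4 : INR K <= 4 * (b / e)) by (unfold Rdiv in *; lra).
    assert (HK5 : INR K <= 8 * s / (3 * cc)).
    { assert (b / e <= (2/3) / e) by (apply Rmult_le_compat_r; [apply Rlt_le, Rinv_0_lt_compat|]; lra).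
      assert ((2/3)/e = (2/3) * s / cc) by (unfold e; field; lra). lra. }
    assert (HKe : INR K * e <= 4 * b).
    { replace (4 * b) with (4 * (b / e) * e) by (field; lra). apply Rmult_le_compat_r; lra. }
    assert (Hnb : n * e / 12 <= n * b * / (3 * INR K)).
    { apply Rmult_le_reg_r with (3 * INR K); [lra|].
      rewrite Rmult_assoc, Rinv_l by lra. nra. }
    set (D := cc * s ^ 2 / 24).
    assert (HD1 : b * INR N + D <= INR j).
    { assert (b * INR N <= n * b) by (rewrite HNn; nra).
      assert (8 * s / (3 * cc) <= cc * s ^ 2 / 24) by lra.
      unfold D. nra. }
    assert (HD2 : 0 < D <= b * INR N).
    { unfold D. split; [nra|].
      assert (e * INR N <= b * INR N) by (apply Rmult_le_compat_r; [apply pos_INR| lra]).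
      assert (e * INR N = cc * s^2 - e) by (rewrite HNn; lra). lra. }
    apply Rle_trans with (1 := tail_up N b D j ltac:(lra) HD2 HD1 Hj).
    apply exp_small; [lra|].
    assert (Hlam : b * INR N <= s ^ 3) by (assert (b * INR N <= INR N) by nra; lra).
    apply Rle_trans with (D ^ 2 / (8 * s ^ 3)).
    + unfold D. replace ((cc * s ^ 2 / 24) ^ 2 / (8 * s ^ 3)) with (cc ^ 2 / 4608 * s) by (field; lra). lra.
    + unfold Rdiv. apply Rmult_le_compat_l; [nra|]. apply Rinv_le_contravar; nra.
  -
    apply Rnot_le_lt in Hbe2.
    assert (HK3 : INR K <= 3).
    { assert (HK4 : INR K < 4).
      { assert (b / e < 1).
        { apply (Rmult_lt_reg_r e); [lra|]. unfold Rdiv. rewrite Rmult_assoc, Rinv_l by lra. lra. }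
        unfold Rdiv in *. lra. }
      destruct (le_lt_dec K 3) as [HK3|HK3].
      - apply le_INR in HK3. simpl in HK3. lra.
      - exfalso. assert (INR 4 <= INR K) by (apply le_INR; lia). simpl in *. lra. }
    assert (HjA2 : n * b * (1 + 1/9) - 3 < INR j).
    { assert (/ 9 <= / (3 * INR K)) by (apply Rinv_le_contravar; lra).
      assert (0 <= n * b) by nra. nra. }
    destruct (Rle_dec (cc * s ^ 2 / 32) (n * b)) as [Hnb|Hnb].
    + set (D := n * b / 18).
      assert (HD1 : b * INR N + D <= INR j) by (rewrite HNn; unfold D; nra).
      assert (HD2 : 0 < D <= b * INR N) by (rewrite HNn; unfold D; split; nra).
      apply Rle_trans with (1 := tail_up N b D j ltac:(lra) HD2 HD1 Hj).
      apply exp_small; [lra|].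
      assert (Hlam : b * INR N <= n * b) by (rewrite HNn; nra).
      apply Rle_trans with (D ^ 2 / (8 * (n * b))).
      * unfold D. replace ((n * b / 18) ^ 2 / (8 * (n * b))) with (n * b / 2592) by (field; nra). nra.
      * unfold Rdiv. apply Rmult_le_compat_l; [nra|]. apply Rinv_le_contravar; nra.
    + apply Rnot_le_lt in Hnb.
      apply Rle_trans with (1 := chernoff_pois N b j ltac:(lra) Hj).
      replace (b * INR N * (exp 2 - 1) - 2 * INR j) with (- (2 * INR j - b * INR N * (exp 2 - 1))) by ring.
      apply exp_small; [lra|].
      assert (H9 := exp2_le).
      assert (1 <= exp 2) by (assert (H := exp_ineq1_le 2); lra).
      assert (b * INR N <= n * b) by (rewrite HNn; nra).
      assert (0 <= b * INR N) by nra.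
      assert (b * INR N * (exp 2 - 1) <= b * INR N * 8) by (apply Rmult_le_compat_l; lra).
      nra.
Qed.

Lemma lemmaY N b s j :
  0 < s -> s ^ 3 = INR (S N) -> cc <= s -> 0 <= b <= 2/3 -> (j <= N)%nat ->
  b * binom_pmf N b j <= cc / s * Td N b (S j) + / s ^ 6.
Proof.
  intros Hs Hs3 Hcs Hb Hj.
  set (e := cc / s).
  assert (He : 0 < e <= 1).
  { unfold e. split; [apply Rdiv_lt_0_compat; lra|].
    apply Rmult_le_reg_r with s; [lra|]. unfold Rdiv. rewrite Rmult_assoc, Rinv_l by lra. lra. }
  assert (Hs6 : 0 <= / s ^ 6) by (apply Rlt_le, Rinv_0_lt_compat, pow_lt; lra).
  assert (HTd : 0 <= Td N b (S j)) by (apply Td_nonneg; lra).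
  assert (Hg0 : 0 <= binom_pmf N b j) by (apply pmf_nonneg; lra).
  destruct (Req_dec b 0) as [Hb0|Hb0].
  { rewrite Hb0 at 1. rewrite Rmult_0_l. apply Rplus_le_le_0_compat; auto. apply Rmult_le_pos; [lra| exact HTd]. }
  assert (Hbp : 0 < b) by lra.
  set (n := INR (S N)).
  assert (Hn : n = s ^ 3) by (unfold n; auto).
  assert (HnN : n = INR N + 1) by (unfold n; rewrite S_INR; auto).
  assert (Hs2 : s <= s ^ 2) by nra.
  assert (Hn9 : 9 * s ^ 2 <= n).
  { rewrite Hn. assert (0 <= s^2 * (s-9)) by (apply Rmult_le_pos; [nra|lra]).
    replace (s^3) with (s^2*s) by ring. nra. }
  assert (Hen : e * n = cc * s ^ 2) by (unfold e; rewrite Hn; field; lra).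
  destruct (nat_ceil (2 * b / e + 1)) as [K [HK1 HK2]].
  { assert (0 <= 2 * b / e) by (apply Rlt_le, Rdiv_lt_0_compat; lra). lra. }
  assert (HK : 1 <= INR K).
  { assert (0 <= 2 * b / e) by (apply Rlt_le, Rdiv_lt_0_compat; lra). lra. }
  assert (HKn : (1 <= K)%nat) by (apply INR_le; simpl; lra).
  assert (Hbe : b / e * e = b) by (field; lra).
  assert (HKinv : 0 < / INR K <= 1) by (split; [apply Rinv_0_lt_compat; lra| rewrite <- Rinv_1; apply Rinv_le_contravar; lra]).
  assert (Hrest : n * b * (1 + / (3 * INR K)) - INR K < INR j ->
      b * binom_pmf N b j <= e * Td N b (S j) + / s ^ 6).
  { intros HjA.
    destruct (le_lt_dec N j) as [HjN|HjN];
    [|destruct (Rle_dec (INR (S j)) (e * n / 2)) as [HB|HB]].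
    2:{
      assert (Hg1 : binom_pmf N b (S j) <= Td N b (S j)).
      { unfold Td. assert (H := sum_tail_block (binom_pmf N b) N (S j) 0).
        simpl in H. rewrite Nat.add_0_r in H. apply H; [intros; apply pmf_nonneg; lra| lia]. }
      rewrite pmf_ratio in Hg1 by (lra || lia).
      assert (HNj : INR (N - j) = n - INR (S j)).
      { rewrite minus_INR by lia. rewrite S_INR, HnN. ring. }
      rewrite HNj in Hg1.
      set (v := INR (S j)) in *.
      assert (Hv : 0 < v) by (apply lt_0_INR; lia).
      assert (Hrat : b <= e * ((n - v) * b / (v * (1 - b)))).
      { apply Rmult_le_reg_r with (v * (1 - b)); [nra|].
        replace (e * ((n - v) * b / (v * (1 - b))) * (v * (1 - b))) with (e * (n - v) * b) by (field; lra).
        assert (v * e <= v) by nra. assert (v * (1 + e) <= e * n) by (replace (v * (1 + e)) with (v + v * e) by ring; lra).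
        assert (v <= e * (n - v)) by nra.
        assert (v * (1 - b) <= v) by nra. nra. }
      assert (b * binom_pmf N b j <= e * Td N b (S j)).
      { apply Rle_trans with (e * (binom_pmf N b j * ((n - v) * b / (v * (1 - b))))).
        - replace (e * (binom_pmf N b j * ((n - v) * b / (v * (1 - b))))) with
            (binom_pmf N b j * (e * ((n - v) * b / (v * (1 - b))))) by ring.
          rewrite (Rmult_comm b). apply Rmult_le_compat_l; auto.
        - apply Rmult_le_compat_l; lra. }
      lra. }
    all: assert (HjB : e * n / 2 < INR (S j)) by
      (first [ apply Rnot_le_lt; assumption
             | replace j with N by lia; fold n; assert (0 < n) by (rewrite Hn; apply pow_lt; lra); nra ]).
    all: assert (Hgs : binom_pmf N b j <= / s ^ 6);
      [ | assert (0 <= e * Td N b (S j)) by (apply Rmult_le_pos; lra);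
          assert (b * binom_pmf N b j <= binom_pmf N b j) by nra; lra ].
    all: clear - HjA HjB Hs Hs3 Hcs Hb Hj He Hbp Hn HnN Hs2 Hn9 Hen HK1 HK2 HK HKn Hbe HKinv.
    all: apply (tailY N b s K j); auto; try lra. }
  destruct (le_lt_dec (j + K) N) as [HA1|HA1];
  [destruct (Rle_dec (INR (j + K)) (n * b * (1 + / (3 * INR K)))) as [HA2|HA2]|].
  -
    set (th := 1 - / INR K).
    assert (Hblock : forall l, (l <= K)%nat -> th ^ l * binom_pmf N b j <= binom_pmf N b (j + l)).
    { induction l; intros Hl.
      - simpl. rewrite Nat.add_0_r. lra.
      - assert (IH := IHl ltac:(lia)).
        replace (j + S l)%nat with (S (j + l)) by lia.
        rewrite pmf_ratio by (lra || lia).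
        set (k := (j + l)%nat) in *.
        assert (Hr : th <= INR (N - k) * b / (INR (S k) * (1 - b))).
        { assert (HNk : INR (N - k) = n - INR (S k)).
          { rewrite minus_INR by lia. rewrite S_INR, HnN. ring. }
          rewrite HNk.
          assert (HSk : INR (S k) <= n * b * (1 + / (3 * INR K))).
          { apply Rle_trans with (2 := HA2). apply le_INR. unfold k. lia. }
          assert (HSk0 : 0 < INR (S k)) by (apply lt_0_INR; lia).
          apply Rmult_le_reg_r with (INR (S k) * (1 - b)); [nra|].
          unfold Rdiv. rewrite Rmult_assoc, Rinv_l by nra. rewrite Rmult_1_r.
          unfold th. set (u := / INR K) in *.
          rewrite Rinv_mult in HSk. fold u in HSk.
          set (v := INR (S k)) in *.
          (* (n - v) b - (1-u) v (1-b) = n b - v (1 - u (1-b)) >= 0 *)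
          assert (Hw : 0 <= 1 - u * (1 - b)) by nra.
          assert (Hprod : (1 + / 3 * u) * (1 - u * (1 - b)) <= 1).
          { assert (0 <= u * u) by nra. nra. }
          assert (v * (1 - u * (1 - b)) <= n * b * (1 + / 3 * u) * (1 - u * (1 - b))).
          { apply Rmult_le_compat_r; auto. }
          assert (0 <= n * b) by (rewrite Hn; nra).
          assert (n * b * (1 + / 3 * u) * (1 - u * (1 - b)) <= n * b).
          { rewrite Rmult_assoc. rewrite <- (Rmult_1_r (n * b)) at 2. apply Rmult_le_compat_l; auto. }
          nra. }
        simpl pow.
        assert (0 <= th) by (unfold th; lra).
        assert (0 <= binom_pmf N b k) by (apply pmf_nonneg; lra).
        apply Rle_trans with (th * binom_pmf N b k).
        + rewrite Rmult_assoc. apply Rmult_le_compat_l; auto.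
        + rewrite Rmult_comm. apply Rmult_le_compat_l; auto. }
    assert (Hsum : th * ((INR K + 1) / 2) * binom_pmf N b j <= Td N b (S j)).
    { apply Rle_trans with (sum_f_R0 (fun l => binom_pmf N b (S j + l)%nat) (K - 1)).
      - apply Rle_trans with (sum_f_R0 (fun l => th ^ (S l) * binom_pmf N b j) (K - 1)).
        + rewrite (sum_ext _ (fun l => (th * binom_pmf N b j) * th ^ l)) by (intros; simpl; ring).
          rewrite sum_scal.
          replace (th * ((INR K + 1) / 2) * binom_pmf N b j) with
            ((th * binom_pmf N b j) * ((INR K + 1) / 2)) by ring.
          apply Rmult_le_compat_l; [apply Rmult_le_pos; unfold th; lra|].
          apply geo_lower; auto. unfold th; lra.
        + apply sum_le_ext. intros l Hl. replace (S j + l)%nat with (j + S l)%nat by lia.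
          apply Hblock. lia.
      - unfold Td. apply sum_tail_block; [intros; apply pmf_nonneg; lra| lia]. }
    assert (Hth : b / e <= th * ((INR K + 1) / 2)).
    { unfold th. replace ((1 - / INR K) * ((INR K + 1) / 2)) with ((INR K - 1) / 2 + (1 - / INR K) / 2).
      - assert (0 <= (1 - / INR K) / 2) by lra. assert (2 * (b / e) + 1 <= INR K) by (unfold Rdiv in *; lra). lra.
      - field. lra. }
    assert (b * binom_pmf N b j <= e * Td N b (S j)).
    { apply Rle_trans with (e * (th * ((INR K + 1) / 2) * binom_pmf N b j)).
      - replace (b * binom_pmf N b j) with (e * (b / e) * binom_pmf N b j) by (field; lra).
        rewrite !Rmult_assoc. apply Rmult_le_compat_l; [lra|].
        rewrite <- Rmult_assoc. apply Rmult_le_compat_r; auto.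
      - apply Rmult_le_compat_l; lra. }
    lra.
  - apply Hrest. apply Rnot_le_lt in HA2. rewrite plus_INR in HA2. lra.
  - apply Hrest. assert (HjK : (N < j + K)%nat) by lia.
    assert (H1 : INR N < INR (j + K)) by (apply lt_INR; auto). rewrite plus_INR in H1.
    assert (n * b * (1 + / (3 * INR K)) <= INR N).
    { assert (/ (3 * INR K) <= 1/3).
      { rewrite Rinv_mult. assert (/ 3 = 1/3) by field. nra. }
      assert (0 <= / (3 * INR K)) by (apply Rlt_le, Rinv_0_lt_compat; lra).
      assert (b * (1 + / (3 * INR K)) <= 8/9) by nra.
      assert (0 <= n) by (rewrite Hn; apply pow_le; lra).
      assert (n * (b * (1 + / (3 * INR K))) <= n * (8/9)) by (apply Rmult_le_compat_l; lra).
      assert (1 <= s ^ 2) by nra.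
      rewrite HnN in *. nra. }
    lra.
Qed.

Lemma sum_indic (h : nat -> R) k c m :
  sum_f_R0 (fun i => h i * (if Nat.eqb i k then c else 0)) m
  = if Nat.leb k m then h k * c else 0.
Proof.
  induction m.
  - destruct k; simpl; ring.
  - rewrite sum_S, IHm. destruct (Nat.eqb (S m) k) eqn:E.
    + apply Nat.eqb_eq in E. subst.
      replace (Nat.leb (S m) m) with false by (symmetry; apply Nat.leb_gt; lia).
      rewrite Nat.leb_refl. cbv iota. ring.
    + apply Nat.eqb_neq in E. destruct (Nat.leb k m) eqn:E2.
      * apply Nat.leb_le in E2. replace (Nat.leb k (S m)) with true by (symmetry; apply Nat.leb_le; lia). cbv iota. ring.
      * apply Nat.leb_gt in E2. replace (Nat.leb k (S m)) with false by (symmetry; apply Nat.leb_gt; lia). cbv iota. ring.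
Qed.

Lemma pmf_le1 N a k : 0 <= a <= 1 -> (k <= N)%nat -> binom_pmf N a k <= 1.
Proof.
  intros. rewrite <- (pmf_total N a). apply (sum_term_le (fun k => binom_pmf N a k)); auto.
  intros; apply pmf_nonneg; auto.
Qed.

Lemma Fd_full N a : Fd N a N = 1.
Proof. unfold Fd. rewrite Nat.min_id. apply pmf_total. Qed.

Lemma smallX m a E N : 0 <= a <= 2/3 -> 30 <= E -> (S N <= m)%nat ->
  a * binom_pmf m a (S N) <= E * Fd m a N + 2 / INR (S N) ^ 2.
Proof.
  intros Ha HE HN.
  assert (HFd : binom_pmf m a N <= Fd m a N).
  { unfold Fd. replace (Nat.min m N) with N by lia.
    apply (sum_term_le (binom_pmf m a) N N); [intros; apply pmf_nonneg; lra| lia]. }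
  assert (Hf0 : 0 <= binom_pmf m a N) by (apply pmf_nonneg; lra).
  assert (Hn : 0 < INR (S N)) by (apply lt_0_INR; lia).
  assert (Hn2 : 0 <= 2 / INR (S N) ^ 2) by (apply Rlt_le, Rdiv_lt_0_compat; [lra| apply pow_lt; lra]).
  assert (HF0 : 0 <= Fd m a N) by (apply Fd_nonneg; lra).
  destruct (Req_dec a 0) as [Ha0|Ha0].
  { rewrite Ha0 at 1. rewrite Rmult_0_l. assert (0 <= E * Fd m a N) by nra. lra. }
  assert (Hm : INR (S N) <= INR m) by (apply le_INR; auto).
  destruct (Rle_dec (3 * INR m * a ^ 2) (E * INR (S N))) as [Hc|Hc].
  - rewrite pmf_ratio by (lra || lia).
    assert (HmN : INR (m - N) <= INR m) by (apply le_INR; lia).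
    assert (HmN0 : 0 <= INR (m - N)) by apply pos_INR.
    assert (Hr : a * (INR (m - N) * a / (INR (S N) * (1 - a))) <= E).
    { apply Rmult_le_reg_r with (INR (S N) * (1 - a)); [nra|].
      replace (a * (INR (m - N) * a / (INR (S N) * (1 - a))) * (INR (S N) * (1 - a)))
        with (INR (m - N) * a ^ 2) by (field; lra).
      assert (INR (m - N) * a ^ 2 <= INR m * a ^ 2) by (apply Rmult_le_compat_r; nra).
      assert (0 <= INR m * a^2) by nra.
      assert (1/3 <= 1 - a) by lra.
      assert (E * INR (S N) * (1/3) <= E * INR (S N) * (1 - a)) by (apply Rmult_le_compat_l; nra).
      lra. }
    assert (a * (binom_pmf m a N * (INR (m - N) * a / (INR (S N) * (1 - a)))) <= E * binom_pmf m a N).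
    { replace (a * (binom_pmf m a N * (INR (m - N) * a / (INR (S N) * (1 - a)))))
        with (binom_pmf m a N * (a * (INR (m - N) * a / (INR (S N) * (1 - a))))) by ring.
      rewrite (Rmult_comm E). apply Rmult_le_compat_l; auto. }
    assert (E * binom_pmf m a N <= E * Fd m a N) by (apply Rmult_le_compat_l; lra).
    lra.
  - apply Rnot_le_lt in Hc.
    assert (Hma : 10 * INR (S N) < INR m * a).
    { assert (a ^ 2 <= a) by nra.
      assert (INR m * a ^ 2 <= INR m * a) by (apply Rmult_le_compat_l; [apply pos_INR| auto]).
      nra. }
    assert (Hch := chernoff_low m a (1/2) (S N) ltac:(lra) ltac:(lra) HN).
    assert (binom_pmf m a (S N) <= / INR (S N) ^ 2).
    { apply Rle_trans with (1 := Hch).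
      apply Rle_trans with (exp (- (4 * INR (S N)))).
      - apply exp_mono. nra.
      - rewrite exp_Ropp. apply Rinv_le_contravar; [apply pow_lt; lra|].
        replace (4 * INR (S N)) with (2 * INR (S N) + 2 * INR (S N)) by ring.
        rewrite exp_plus. assert (H1 := exp_ineq1_le (2 * INR (S N))).
        set (x := INR (S N)) in *. replace (x ^ 2) with (x * x) by ring.
        apply Rmult_le_compat; lra. }
    assert (0 <= E * Fd m a N) by nra.
    assert (a * binom_pmf m a (S N) <= binom_pmf m a (S N)) by (assert (0 <= binom_pmf m a (S N)) by (apply pmf_nonneg; lra); nra).
    assert (/ INR (S N) ^ 2 <= 2 / INR (S N) ^ 2).
    { unfold Rdiv. assert (0 < / INR (S N) ^ 2) by (apply Rinv_0_lt_compat, pow_lt; lra). lra. }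
    lra.
Qed.

Lemma smallY N b E i : 0 <= b <= 2/3 -> INR (S N) <= E -> (i < N)%nat ->
  b * binom_pmf N b i <= E * Td N b (S i).
Proof.
  intros Hb HE Hi.
  assert (Hg0 : 0 <= binom_pmf N b i) by (apply pmf_nonneg; lra).
  destruct (Req_dec b 0) as [Hb0|Hb0].
  { rewrite Hb0 at 1. rewrite Rmult_0_l. apply Rmult_le_pos; [|apply Td_nonneg; lra].
    assert (0 < INR (S N)) by (apply lt_0_INR; lia). lra. }
  assert (Hg1 : binom_pmf N b (S i) <= Td N b (S i)).
  { unfold Td. assert (H := sum_tail_block (binom_pmf N b) N (S i) 0).
    simpl in H. rewrite Nat.add_0_r in H. apply H; [intros; apply pmf_nonneg; lra| lia]. }
  rewrite pmf_ratio in Hg1 by (lra || lia).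
  assert (HNi : 1 <= INR (N - i)) by (apply (le_INR 1); lia).
  assert (HSi : 0 < INR (S i)) by (apply lt_0_INR; lia).
  assert (HSiN : INR (S i) <= INR (S N)) by (apply le_INR; lia).
  assert (Hr : b <= E * (INR (N - i) * b / (INR (S i) * (1 - b)))).
  { apply Rmult_le_reg_r with (INR (S i) * (1 - b)); [nra|].
    replace (E * (INR (N - i) * b / (INR (S i) * (1 - b))) * (INR (S i) * (1 - b)))
      with (E * INR (N - i) * b) by (field; lra).
    assert (INR (S i) * (1 - b) <= INR (S i)) by nra.
    assert (INR (S i) <= E * INR (N - i)) by nra.
    nra. }
  apply Rle_trans with (E * (binom_pmf N b i * (INR (N - i) * b / (INR (S i) * (1 - b))))).
  - replace (E * (binom_pmf N b i * (INR (N - i) * b / (INR (S i) * (1 - b))))) with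
      (binom_pmf N b i * (E * (INR (N - i) * b / (INR (S i) * (1 - b))))) by ring.
    rewrite (Rmult_comm b). apply Rmult_le_compat_l; auto.
  - apply Rmult_le_compat_l; [|auto]. assert (0 < INR (S N)) by (apply lt_0_INR; lia). lra.
Qed.

Lemma cube_root (m : nat) : (1 <= m)%nat ->
  let s := Rpower (INR m) (1/3) in 0 < s /\ s ^ 3 = INR m /\ Rpower (INR m) (- (1/3)) = / s.
Proof.
  intros Hm s. assert (Hm0 : 0 < INR m) by (apply lt_0_INR; lia).
  split; [unfold s, Rpower; apply exp_pos|]. split.
  - unfold s. rewrite <- Rpower_pow by (unfold Rpower; apply exp_pos).
    rewrite Rpower_mult. replace (1 / 3 * INR 3) with 1 by (simpl; field). apply Rpower_1; auto.
  - apply Rpower_Ropp.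
Qed.

Lemma lower_part M n p q : 0 <= p <= 2/3 -> 0 <= q <= 2/3 ->
  let s := Rpower (INR (S M)) (1/3) in 0 < s -> s ^ 3 = INR (S M) ->
  (1 - cc / s) * Pwin M n p q - / s ^ 6 <= Pwin (S M) n p q.
Proof.
  intros Hp Hq s Hs Hs3.
  set (a := Rmax p q). set (b := Rmin p q).
  assert (Ha : 0 <= a <= 2/3) by (unfold a, Rmax; destruct (Rle_dec p q); lra).
  assert (Hb : 0 <= b <= 2/3) by (unfold b, Rmin; destruct (Rle_dec p q); lra).
  set (h := fun j => binom_pmf n b j * (a * (if Nat.leb j M then binom_pmf M a j else 0))).
  assert (HP1 : Pwin (S M) n p q = Pwin M n p q - sum_f_R0 h n).
  { rewrite !Pwin_form1. fold a b.
    rewrite (sum_ext _ (fun j => binom_pmf n b j * Fd M a j + (-1) * h j))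
      by (intros; unfold h; rewrite Fd_pascal; ring).
    rewrite sum_add, sum_scal. ring. }
  assert (HB : sum_f_R0 h n <= cc / s * Pwin M n p q + / s ^ 6).
  { rewrite Pwin_form1. fold a b.
    apply Rle_trans with (sum_f_R0 (fun j => binom_pmf n b j * (cc / s * Fd M a j + / s ^ 6)) n).
    - apply sum_le_ext. intros j _. unfold h. apply Rmult_le_compat_l; [apply pmf_nonneg; lra|].
      destruct (Nat.leb j M) eqn:E.
      + apply Nat.leb_le in E. apply lemmaX; auto.
      + rewrite Rmult_0_r. apply Rplus_le_le_0_compat.
        * apply Rmult_le_pos; [apply Rlt_le, Rdiv_lt_0_compat; lra| apply Fd_nonneg; lra].
        * apply Rlt_le, Rinv_0_lt_compat, pow_lt; lra.
    - rewrite (sum_ext _ (fun j => cc / s * (binom_pmf n b j * Fd M a j) + / s ^ 6 * binom_pmf n b j))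
        by (intros; ring).
      rewrite sum_add, !sum_scal, pmf_total. lra. }
  lra.
Qed.

Lemma upper_large m N p q : 0 <= p <= 2/3 -> 0 <= q <= 2/3 ->
  forall s, 0 < s -> s ^ 3 = INR (S N) -> cc <= s ->
  Pwin m (S N) p q <= (1 + cc / s) * Pwin m N p q + / s ^ 6.
Proof.
  intros Hp Hq s Hs Hs3 Hcs.
  set (a := Rmax p q). set (b := Rmin p q).
  assert (Ha : 0 <= a <= 2/3) by (unfold a, Rmax; destruct (Rle_dec p q); lra).
  assert (Hb : 0 <= b <= 2/3) by (unfold b, Rmin; destruct (Rle_dec p q); lra).
  assert (He : 0 < cc / s) by (apply Rdiv_lt_0_compat; lra).
  assert (Hs6 : 0 < / s ^ 6) by (apply Rinv_0_lt_compat, pow_lt; lra).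
  rewrite !Pwin_form2. fold a b.
  apply Rle_trans with (sum_f_R0 (fun i => binom_pmf m a i * ((1 + cc / s) * Td N b i + / s ^ 6)) m).
  - apply sum_le_ext. intros i _. apply Rmult_le_compat_l; [apply pmf_nonneg; lra|].
    destruct i.
    + rewrite !Td_0. lra.
    + rewrite Td_pascal. destruct (Nat.leb i N) eqn:E.
      * apply Nat.leb_le in E. assert (H := lemmaY N b s i Hs Hs3 Hcs Hb E). lra.
      * assert (0 <= Td N b (S i)) by (apply Td_nonneg; lra). nra.
  - rewrite (sum_ext _ (fun i => (1 + cc / s) * (binom_pmf m a i * Td N b i) + / s ^ 6 * binom_pmf m a i))
      by (intros; ring).
    rewrite sum_add, !sum_scal, pmf_total. lra.
Qed.

Lemma upper_small m N p q : 0 <= p <= 2/3 -> 0 <= q <= 2/3 ->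
  forall E, INR (S N) <= E -> 30 <= E ->
  Pwin m (S N) p q <= (1 + 2 * E) * Pwin m N p q + 2 / INR (S N) ^ 2.
Proof.
  intros Hp Hq E HE HE30.
  set (a := Rmax p q). set (b := Rmin p q).
  assert (Ha : 0 <= a <= 2/3) by (unfold a, Rmax; destruct (Rle_dec p q); lra).
  assert (Hb : 0 <= b <= 2/3) by (unfold b, Rmin; destruct (Rle_dec p q); lra).
  assert (Hba : b <= a) by (unfold a, b, Rmax, Rmin; destruct (Rle_dec p q); lra).
  assert (HP0 : 0 <= Pwin m N p q) by (apply Pwin_nonneg; lra).
  set (c := b * binom_pmf N b N).
  assert (Hc0 : 0 <= c) by (unfold c; apply Rmult_le_pos; [lra| apply pmf_nonneg; lra]).
  assert (Hstep : Pwin m (S N) p q <= (1 + E) * Pwin m N p q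
            + (if Nat.leb (S N) m then binom_pmf m a (S N) * c else 0)).
  { rewrite !Pwin_form2. fold a b. rewrite <- sum_indic.
    rewrite <- sum_scal, <- sum_add. apply sum_le_ext. intros i _.
    replace ((1 + E) * (binom_pmf m a i * Td N b i) + binom_pmf m a i * (if Nat.eqb i (S N) then c else 0))
      with (binom_pmf m a i * ((1 + E) * Td N b i + (if Nat.eqb i (S N) then c else 0))) by ring.
    apply Rmult_le_compat_l; [apply pmf_nonneg; lra|].
    assert (HTd : 0 <= Td N b i) by (apply Td_nonneg; lra).
    destruct i.
    + rewrite !Td_0. simpl. lra.
    + rewrite Td_pascal. destruct (lt_eq_lt_dec i N) as [[Hl|Heq]|Hg].
      * replace (Nat.leb i N) with true by (symmetry; apply Nat.leb_le; lia).
        replace (Nat.eqb (S i) (S N)) with false by (symmetry; apply Nat.eqb_neq; lia).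
        assert (H := smallY N b E i Hb HE Hl). lra.
      * subst i. rewrite Nat.leb_refl, Nat.eqb_refl. rewrite Td_S, Fd_full. unfold c. lra.
      * replace (Nat.leb i N) with false by (symmetry; apply Nat.leb_gt; lia).
        replace (Nat.eqb (S i) (S N)) with false by (symmetry; apply Nat.eqb_neq; lia).
        assert (0 <= E * Td N b (S i)) by (apply Rmult_le_pos; [|apply Td_nonneg]; lra). lra. }
  destruct (Nat.leb (S N) m) eqn:Em.
  - apply Nat.leb_le in Em.
    assert (HX := smallX m a E N Ha HE30 Em).
    assert (Hg : 0 <= binom_pmf N b N <= 1) by (split; [apply pmf_nonneg| apply pmf_le1]; lra || lia).
    assert (HF : binom_pmf N b N * Fd m a N <= Pwin m N p q).
    { rewrite Pwin_form1. fold a b.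
      apply (sum_term_le (fun j => binom_pmf N b j * Fd m a j) N N); [|lia].
      intros. apply Rmult_le_pos; [apply pmf_nonneg| apply Fd_nonneg]; lra. }
    assert (Hf : 0 <= binom_pmf m a (S N)) by (apply pmf_nonneg; lra).
    assert (binom_pmf m a (S N) * c <= binom_pmf N b N * (a * binom_pmf m a (S N))).
    { unfold c. assert (0 <= binom_pmf m a (S N) * binom_pmf N b N) by nra. nra. }
    assert (binom_pmf N b N * (a * binom_pmf m a (S N))
            <= binom_pmf N b N * (E * Fd m a N + 2 / INR (S N) ^ 2)) by (apply Rmult_le_compat_l; lra).
    assert (H2 : 0 <= 2 / INR (S N) ^ 2) by (apply Rlt_le, Rdiv_lt_0_compat; [lra| apply pow_lt, lt_0_INR; lia]).
    assert (binom_pmf N b N * (2 / INR (S N) ^ 2) <= 2 / INR (S N) ^ 2) by nra.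
    assert (E * (binom_pmf N b N * Fd m a N) <= E * Pwin m N p q) by (apply Rmult_le_compat_l; lra).
    nra.
  - assert (0 <= 2 / INR (S N) ^ 2) by (apply Rlt_le, Rdiv_lt_0_compat; [lra| apply pow_lt, lt_0_INR; lia]).
    nra.
Qed.

Theorem lemma3p3 :
  exists C : R, 0 < C /\
    forall (m n : nat) (p q : R),
      (1 <= m)%nat -> (1 <= n)%nat ->
      0 <= p <= 2 / 3 -> 0 <= q <= 2 / 3 ->
      (1 - C * Rpower (INR m) (- (1 / 3))) * Pwin (m - 1) n p q - 2 / (INR m ^ 2)
        <= Pwin m n p q
      /\
      Pwin m n p q
        <= (1 + C * Rpower (INR n) (- (1 / 3))) * Pwin m (n - 1) p q + 2 / (INR n ^ 2).
Proof.
  exists (2 * cc ^ 4). split; [lra|].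
  intros m n p q Hm Hn Hp Hq. split.
  - destruct (cube_root m Hm) as [Hs [Hs3 HR]]. set (s := Rpower (INR m) (1/3)) in *.
    rewrite HR. destruct m as [|M]; [lia|]. replace (S M - 1)%nat with M by lia.
    assert (H : (1 - cc / s) * Pwin M n p q - / s ^ 6 <= Pwin (S M) n p q) by exact (lower_part M n p q Hp Hq Hs Hs3).
    assert (HP : 0 <= Pwin M n p q) by (apply Pwin_nonneg; lra).
    assert (Hm2 : INR (S M) ^ 2 = s ^ 6) by (rewrite <- Hs3; ring).
    rewrite Hm2.
    assert (Hs6 : 0 < / s ^ 6) by (apply Rinv_0_lt_compat, pow_lt; lra).
    assert (cc / s <= 2 * cc ^ 4 * / s).
    { unfold Rdiv. apply Rmult_le_compat_r; [apply Rlt_le, Rinv_0_lt_compat; lra| lra]. }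
    assert (cc / s * Pwin M n p q <= 2 * cc ^ 4 * / s * Pwin M n p q) by (apply Rmult_le_compat_r; lra).
    replace ((1 - 2 * cc ^ 4 * / s) * Pwin M n p q) with (Pwin M n p q - 2 * cc ^ 4 * / s * Pwin M n p q) by ring.
    replace ((1 - cc / s) * Pwin M n p q) with (Pwin M n p q - cc / s * Pwin M n p q) in H by ring.
    unfold Rdiv in *. lra.
  - destruct (cube_root n Hn) as [Hs [Hs3 HR]]. set (s := Rpower (INR n) (1/3)) in *.
    rewrite HR. destruct n as [|N]; [lia|]. replace (S N - 1)%nat with N by lia.
    assert (HP : 0 <= Pwin m N p q) by (apply Pwin_nonneg; lra).
    destruct (Rle_dec cc s) as [Hcs|Hcs].
    + assert (H := upper_large m N p q Hp Hq s Hs Hs3 Hcs).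
      assert (Hm2 : INR (S N) ^ 2 = s ^ 6) by (rewrite <- Hs3; ring).
      rewrite Hm2.
      assert (Hs6 : 0 < / s ^ 6) by (apply Rinv_0_lt_compat, pow_lt; lra).
      assert (cc / s <= 2 * cc ^ 4 * / s).
      { unfold Rdiv. apply Rmult_le_compat_r; [apply Rlt_le, Rinv_0_lt_compat; lra| lra]. }
      assert (cc / s * Pwin m N p q <= 2 * cc ^ 4 * / s * Pwin m N p q) by (apply Rmult_le_compat_r; lra).
      replace ((1 + 2 * cc ^ 4 * / s) * Pwin m N p q) with (Pwin m N p q + 2 * cc ^ 4 * / s * Pwin m N p q) by ring.
      replace ((1 + cc / s) * Pwin m N p q) with (Pwin m N p q + cc / s * Pwin m N p q) in H by ring.
      unfold Rdiv in *. lra.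
    + apply Rnot_le_lt in Hcs.
      set (E := cc ^ 4 / s).
      assert (HE : INR (S N) <= E).
      { rewrite <- Hs3. unfold E. apply Rmult_le_reg_r with s; [lra|].
        unfold Rdiv. rewrite Rmult_assoc, Rinv_l by lra.
        replace (s ^ 3 * s) with (s ^ 4) by ring. rewrite Rmult_1_r.
        apply pow_incr. lra. }
      assert (HE30 : 30 <= E).
      { unfold E. apply Rmult_le_reg_r with s; [lra|].
        unfold Rdiv. rewrite Rmult_assoc, Rinv_l by lra. nra. }
      assert (H := upper_small m N p q Hp Hq E HE HE30).
      replace (2 * cc ^ 4 * / s) with (2 * E) by (unfold E; field; lra).
      exact H.
Qed.
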